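(* Consider the deterministic split-node max-neighbour algorithm described in the context, on a dynamic graph $(G_r)_{r\ge1}$ with node set $V$. For every round $r\ge1$, \[ \phi(V,w_r)\le\phi(V,w_{r-1})-t_{r-1}/60, \] where $t_r:=\max_{u,v\in V}|w_r(u)-w_r(v)|$.
   Context: Setting: a fixed set $V$ of $n$ nodes, a sequence of connected graphs $G_r=(V,E_r)$ ($r\ge1$), $N_r(v)$ the neighbours of $v$ in $G_r$, non-negative real loads $w_0(v)$, and $w_r(v)$ the load of $v$ at the end of round $r$. For $w:V\to\mathbb{R}_{\ge0}$, $\phi(V,w)=\sum_{\{u,v\}\subseteq V}|w(u)-w(v)|$ (sum over unordered pairs of distinct nodes). Algorithm: each node $v$ is split into two virtual nodes $v_s$ (sender) and $v_a$ (receiver). In round $r$: set $w_r^1(v_s)=w_r^1(v_a)=w_{r-1}(v)/2$. Each $v_s$ sends a proposal to $u_a$ where $u\in N_r(v)$ maximizes $|w_{r-1}(u)-w_{r-1}(v)|$ (ties broken by a fixed deterministic rule). Each $v_a$ that received proposals accepts exactly one, from $u_s$ with $u$ maximizing $|w_{r-1}(u)-w_{r-1}(v)|$ among proposers (deterministic tie-breaking). For each accepted pair $(u_s,v_a)$, set both virtual loads to $(w_r^1(u_s)+w_r^1(v_a))/2$; other virtual nodes keep their value; then $w_r(v)$ is the sum of the two virtual loads of $v$. *)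

(* Defs.v *)
From HB Require Import structures.
From mathcomp Require Import all_boot all_order all_algebra.
From mathcomp Require Import reals.
Set Implicit Arguments. Unset Strict Implicit. Unset Printing Implicit Defensive.
Import Order.TTheory GRing.Theory Num.Theory.
Local Open Scope ring_scope.

Section Defs.
Variables (R : realType) (V : finType).

Definition connected_graph (e : rel V) : Prop :=
  symmetric e /\ irreflexive e /\ (forall x y, connect e x y).

Definition phi (w : V -> R) : R :=
  \sum_(u : V) \sum_(v : V | (enum_rank u < enum_rank v)%N) `|w u - w v|.

Definition tdisc (w : V -> R) : R :=
  \big[Num.max/0]_(u : V) \big[Num.max/0]_(v : V) `|w u - w v|.

(* prop v = Some u : the sender v_s proposes to the receiver u_a.
   u must be a neighbour of v maximizing |w u - w v|; None iff v has no
   neighbour.  (Any tie-breaking is allowed.) *)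
Definition proposals_ok (e : rel V) (w : V -> R) (prop : V -> option V) : Prop :=
  forall v, match prop v with
            | Some u => e v u /\ (forall u', e v u' -> `|w u' - w v| <= `|w u - w v|)
            | None => forall u, ~~ e v u
            end.

(* acc v = Some u : the receiver v_a accepts the proposal of the sender u_s.
   u must be a proposer of v maximizing |w u - w v| among the proposers;
   None iff v_a received no proposal.  (Any tie-breaking is allowed.) *)
Definition acceptances_ok (w : V -> R) (prop acc : V -> option V) : Prop :=
  forall v, match acc v with
            | Some u => prop u = Some v /\
                        (forall u', prop u' = Some v -> `|w u' - w v| <= `|w u - w v|)
            | None => forall u, prop u <> Some v
            end.

(* Virtual load of v_s after the round (initially w v / 2). *)
Definition sender_load (w : V -> R) (prop acc : V -> option V) (v : V) : R :=
  match prop v with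
  | Some u => if acc u == Some v then (w v / 2 + w u / 2) / 2 else w v / 2
  | None => w v / 2
  end.

(* Virtual load of v_a after the round (initially w v / 2). *)
Definition receiver_load (w : V -> R) (acc : V -> option V) (v : V) : R :=
  match acc v with
  | Some u => (w u / 2 + w v / 2) / 2
  | None => w v / 2
  end.

Definition round_step (w : V -> R) (prop acc : V -> option V) : V -> R :=
  fun v => sender_load w prop acc v + receiver_load w acc v.

End Defs.

(* Main.v *)
Require Import Defs.
From HB Require Import structures.
From mathcomp Require Import all_boot all_order all_algebra.
From mathcomp Require Import reals.
From mathcomp Require Import ring lra.
Set Implicit Arguments. Unset Strict Implicit. Unset Printing Implicit Defensive.
Import Order.TTheory GRing.Theory Num.Theory.
Local Open Scope ring_scope.

Section Aux.
Variables (R : realType) (V : finType).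

Lemma chain_lemma (e : rel V) (w D : V -> R) :
  (forall h, 0 <= D h) ->
  (forall x y, e x y -> exists h, `|w x - w h| <= D h /\ `|w y - w x| <= D h) ->
  forall p x (S : {set V}) U, path e x p -> w x <= U ->
  (forall h, h \in S -> w h + 2 * D h <= U) ->
  w (last x p) <= U + 3 * \sum_(h | h \notin S) D h.
Proof.
move=> D0 He; elim=> [|y p IH] x S U /=.
  move=> _ hx _; have : 0 <= \sum_(h | h \notin S) D h by apply: sumr_ge0.
  lra.
move=> /andP[exy pp] hx hS.
have [h [h1 h2]] := He _ _ exy.
move: h1 h2; rewrite !ler_norml => /andP[h1 h1'] /andP[h2 h2'].
have Dh := D0 h.
case hin: (h \in S).
  apply: IH => //; have := hS _ hin; lra.
have -> : \sum_(h0 | h0 \notin S) D h0 = D h + \sum_(h0 | h0 \notin (h |: S)) D h0.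
  rewrite (bigD1 h) /= ?hin //; congr (_ + _); apply: eq_bigl => k.
  by rewrite in_setU1 negb_or andbC.
have := IH y (h |: S) (U + 3 * D h) pp.
have -> : U + 3 * D h + 3 * \sum_(h0 | h0 \notin h |: S) D h0 =
   U + 3 * (D h + \sum_(h0 | h0 \notin h |: S) D h0) by ring.
apply; first lra.
move=> k; rewrite in_setU1 => /orP[/eqP->|kS]; first lra.
have := hS _ kS; lra.
Qed.

Lemma phi_full (w : V -> R) :
  2 * phi w = \sum_u \sum_v `|w u - w v|.
Proof.
pose g u v := if (enum_rank u < enum_rank v)%N then `|w u - w v| else 0.
have -> : \sum_u \sum_v `|w u - w v| = \sum_u \sum_v (g u v + g v u).
  apply: eq_bigr => u _; apply: eq_bigr => v _; rewrite /g.
  case: (ltngtP (enum_rank u) (enum_rank v)) => H.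
  - by rewrite addr0.
  - by rewrite add0r distrC.
  - move/val_inj/enum_rank_inj: H => ->; by rewrite subrr normr0 addr0.
rewrite (eq_bigr (fun u => \sum_v g u v + \sum_v g v u)); last first.
  by move=> u _; rewrite big_split.
rewrite big_split /= [X in _ + X]exchange_big /=.
have -> : \sum_u \sum_v g u v = phi w.
  rewrite /phi; apply: eq_bigr => u _; rewrite [RHS]big_mkcond; by apply: eq_bigr => v _; rewrite /g; case: ifP.
ring.
Qed.

Lemma sumT (F : bool * V -> R) :
  \sum_(i : bool * V) F i = \sum_v (F (true, v) + F (false, v)).
Proof.
rewrite big_split /=.
have -> : \sum_(i : bool * V) F i = \sum_(i : bool * V) F (i.1, i.2).
  by apply: eq_bigr => -[].
by rewrite -(pair_big xpredT xpredT (fun b v => F (b, v))) big_bool.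
Qed.

Lemma half_norm (x y : R) : `|x / 2 - y / 2| = `|x - y| / 2.
Proof. by rewrite -mulrBl normrM (ger0_norm (_ : 0 <= 2^-1)) // invr_ge0. Qed.

Lemma tri4 (a b c d : R) :
  2 * `|a + b - (c + d)| <= `|a - c| + `|a - d| + `|b - c| + `|b - d|.
Proof.
have h1 : `|a + b - (c + d)| <= `|a - c| + `|b - d|.
  by rewrite (_ : a + b - (c + d) = (a - c) + (b - d)) ?ler_normD //; ring.
have h2 : `|a + b - (c + d)| <= `|a - d| + `|b - c|.
  by rewrite (_ : a + b - (c + d) = (a - d) + (b - c)) ?ler_normD //; ring.
lra.
Qed.

End Aux.
Section Round.
Variables (R : realType) (V : finType).
Variables (w0 : V -> R) (prop acc : V -> option V).
Hypothesis Hacc : acceptances_ok w0 prop acc.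

Definition pi (i : bool * V) : bool * V :=
  match i with
  | (true, v) => match prop v with
                 | Some h => if acc h == Some v then (false, h) else (true, v)
                 | None => (true, v) end
  | (false, v) => match acc v with Some u => (true, u) | None => (false, v) end
  end.

Lemma piK : involutive pi.
Proof.
move=> [[] v] /=.
  case E: (prop v) => [h|] /=; last by rewrite E.
  case: eqP => [Hh|Hn] /=; first by rewrite Hh.
  by rewrite E; case: eqP.
have := Hacc v; case E: (acc v) => [u|] /=; last by move=> _; rewrite E.
by move=> [Hu _]; rewrite Hu E eqxx.
Qed.

Definition z0 (i : bool * V) : R := w0 i.2 / 2.
Definition z (i : bool * V) : R := (z0 i + z0 (pi i)) / 2.

Lemma round_z v : round_step w0 prop acc v = z (true, v) + z (false, v).
Proof.
rewrite /round_step /sender_load /receiver_load /z /z0 /=.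
case: (prop v) => [h|]; [case E: (acc h == Some v) |]; case: (acc v) => [u|] /=.
all: lra.
Qed.

Definition Dl (h : V) : R := if acc h is Some u then `|w0 u - w0 h| else 0.

Definition G (a : bool * V -> R) := \sum_(i : bool * V) \sum_(j : bool * V) `|a i - a j|.

Definition B i j := (`|z0 i - z0 j| + `|z0 i - z0 (pi j)| + `|z0 (pi i) - z0 j|
   + `|z0 (pi i) - z0 (pi j)|) / 4.

Lemma Hre (F : bool * V -> R) : \sum_j F (pi j) = \sum_j F j.
Proof. by rewrite [RHS](reindex_inj (inv_inj piK)). Qed.

Lemma step1 : 4 * phi (round_step w0 prop acc) <= G z.
Proof.
have -> : 4 * phi (round_step w0 prop acc) = 2 * (2 * phi (round_step w0 prop acc)) by ring.
rewrite phi_full mulr_sumr.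
have -> : G z = \sum_u \sum_v (`|z (true,u) - z (true,v)| + `|z (true,u) - z (false,v)|
   + `|z (false,u) - z (true,v)| + `|z (false,u) - z (false,v)|).
  rewrite /G sumT; apply: eq_bigr => u _; rewrite !sumT -big_split; apply: eq_bigr => v _ /=.
  ring.
apply: ler_sum => u _; rewrite mulr_sumr; apply: ler_sum => v _.
rewrite !round_z; exact: tri4.
Qed.

Lemma zB i j : `|z i - z j| <= B i j.
Proof.
rewrite /z /B half_norm.
have := tri4 (z0 i) (z0 (pi i)) (z0 j) (z0 (pi j)); lra.
Qed.

Lemma Bpi i : B i (pi i) = `|z0 i - z0 (pi i)| / 2.
Proof.
rewrite /B (piK i) !subrr !normr0 [`|z0 (pi i) - z0 i|]distrC; lra.
Qed.

Lemma step2 : G z <= G z0 - \sum_i `|z0 i - z0 (pi i)| / 2.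
Proof.
have -> : G z0 = \sum_i \sum_j B i j.
  have -> : \sum_i \sum_j B i j = \sum_i ((\sum_j `|z0 i - z0 j|) / 2
       + (\sum_j `|z0 (pi i) - z0 j|) / 2).
    apply: eq_bigr => i _; rewrite /B -mulr_suml !big_split /=.
    rewrite (Hre (fun j => `|z0 i - z0 j|)) (Hre (fun j => `|z0 (pi i) - z0 j|)).
    lra.
  rewrite big_split /= (Hre (fun i => (\sum_j `|z0 i - z0 j|) / 2)) -big_split /=.
  rewrite /G; apply: eq_bigr => i _; lra.
rewrite -sumrB; apply: ler_sum => i _.
rewrite (bigD1 (pi i)) // [X in _ <= X - _](bigD1 (pi i)) //= -Bpi.
have -> : z (pi i) = z i by rewrite /z (piK i) addrC.
rewrite subrr normr0 add0r.
have : \sum_(j | j != pi i) `|z i - z j| <= \sum_(j | j != pi i) B i j.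
  by apply: ler_sum => j _; apply: zB.
lra.
Qed.

Lemma step3 : G z0 = 4 * phi w0.
Proof.
have -> : 4 * phi w0 = 2 * (2 * phi w0) by lra.
rewrite phi_full mulr_sumr /G sumT; apply: eq_bigr => u _.
rewrite !sumT -big_split mulr_sumr; apply: eq_bigr => v _ /=.
rewrite /z0 /= !half_norm; lra.
Qed.

Lemma step4 : \sum_h Dl h / 2 <= \sum_i `|z0 i - z0 (pi i)|.
Proof.
rewrite sumT; apply: ler_sum => v _.
have : 0 <= `|z0 (true, v) - z0 (pi (true, v))| by [].
rewrite /Dl /z0 /=; case: (acc v) => [u|] /=.
  rewrite !half_norm [`|w0 v - w0 u|]distrC; lra.
rewrite subrr normr0; lra.
Qed.

Lemma potential :
  phi (round_step w0 prop acc) <= phi w0 - (\sum_h Dl h) / 16.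
Proof.
have h1 := step1; have h2 := step2; have h3 := step3; have h4 := step4.
rewrite -mulr_suml in h4.
have h5 : \sum_i `|z0 i - z0 (pi i)| / 2 = (\sum_i `|z0 i - z0 (pi i)|) / 2.
  by rewrite mulr_suml.
lra.
Qed.

End Round.

Theorem corollary1 (R : realType) (V : finType)
    (E : nat -> rel V) (w : nat -> V -> R)
    (prop acc : nat -> V -> option V) :
  (forall r, (1 <= r)%N -> connected_graph (E r)) ->
  (forall v, 0 <= w 0%N v) ->
  (forall r, (1 <= r)%N ->
     proposals_ok (E r) (w r.-1) (prop r) /\
     acceptances_ok (w r.-1) (prop r) (acc r) /\
     w r = round_step (w r.-1) (prop r) (acc r)) ->
  forall r, (1 <= r)%N ->
    phi (w r) <= phi (w r.-1) - tdisc (w r.-1) / 60.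
Proof.
move=> Hconn _ Hstep r r1.
have [Hp [Ha ->]] := Hstep r r1.
have [_ [_ Hc]] := Hconn r r1.
set w0 := w r.-1 in Hp Ha *.
set e := E r in Hp Hc *.
have Hpot := @potential _ _ _ _ _ Ha.
set D := Dl w0 (acc r) in Hpot *.
have D0 : forall h, 0 <= D h.
  by move=> h; rewrite /D /Dl; case: (acc r h).
have Hedge : forall x y, e x y -> exists h, `|w0 x - w0 h| <= D h /\ `|w0 y - w0 x| <= D h.
  move=> x y exy; have := Hp x.
  case Epx: (prop r x) => [h|]; last by move/(_ y); rewrite exy.
  move=> [_ Hmax]; exists h; have := Ha h; rewrite /D /Dl.
  case Eah: (acc r h) => [u|]; last by move/(_ x); rewrite Epx.
  move=> [_ Hbest]; have b1 := Hbest x Epx; have b2 := Hmax y exy.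
  split => //; rewrite (distrC (w0 h)) in b2; exact: le_trans b2 b1.
have SD : 0 <= \sum_h D h by apply: sumr_ge0 => h _.
have Ht : tdisc w0 <= 3 * \sum_h D h.
  rewrite /tdisc; apply: (big_ind (fun x => x <= 3 * \sum_h D h)) => [|a b ha hb|u _]; first lra.
    by rewrite ge_max ha hb.
  apply: (big_ind (fun x => x <= 3 * \sum_h D h)) => [|a b ha hb|v _]; first lra.
    by rewrite ge_max ha hb.
  have key : forall a b, w0 b <= w0 a -> `|w0 a - w0 b| <= 3 * \sum_h D h.
    move=> a b hab; rewrite ger0_norm ?subr_ge0 //.
    have /connectP [p pth Hl] := Hc b a.
    have hs : forall h, h \in (set0 : {set V}) -> w0 h + 2 * D h <= w0 b.
      by move=> h; rewrite in_set0.
    have := chain_lemma D0 Hedge pth (lexx (w0 b)) hs.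
    rewrite -Hl.
    have -> : \sum_(h | h \notin (set0 : {set V})) D h = \sum_h D h.
      by apply: eq_bigl => h; rewrite in_set0.
    lra.
  case: (lerP (w0 v) (w0 u)) => H.
    have h := key u v H; rewrite ger0_norm in h; [lra | by rewrite subr_ge0].
  have h := key v u (ltW H); rewrite ger0_norm in h; [lra | rewrite subr_ge0; exact: ltW].
lra.
Qed.
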